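(* Every finite graph is isomorphic to an induced subgraph of the generating graph of some finite group.
   Context: The generating graph of a finite group $G$ has vertex set $G$, with distinct $x,y$ adjacent iff $\langle x,y\rangle=G$. *)

(* Defs.v *)
From mathcomp Require Import all_boot all_fingroup.
Set Implicit Arguments. Unset Strict Implicit. Unset Printing Implicit Defensive.

Local Open Scope group_scope.

Definition gen_adj (gT : finGroupType) (G : {set gT}) (x y : gT) : bool :=
  [&& x \in G, y \in G, x != y & <<[set x; y]>> == G].

Definition simple_graph (V : finType) (e : rel V) : Prop :=
  symmetric e /\ irreflexive e.

Definition induced_embedding (V : finType) (e : rel V)
    (gT : finGroupType) (G : {set gT}) (f : V -> gT) : Prop :=
  injective f /\ (forall v, f v \in G) /\
  (forall x y, e x y = gen_adj G (f x) (f y)).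

(* Main.v *)
Require Import Defs.
From mathcomp Require Import all_boot all_fingroup zmodp.
Set Implicit Arguments. Unset Strict Implicit. Unset Printing Implicit Defensive.


Local Open Scope group_scope.
Lemma dvd_prod_ex (I : finType) (P : pred I) (pr : I -> nat) q :
  prime q -> q %| \prod_(i | P i) pr i -> exists2 i, P i & q %| pr i.
Proof.
move=> qP; apply: (big_ind (fun x => q %| x -> exists2 i, P i & q %| pr i)).
- by rewrite Euclid_dvd1.
- by move=> x y Hx Hy; rewrite Euclid_dvdM // => /orP[/Hx|/Hy].
- by move=> i Pi Hq; exists i.
Qed.

Lemma gen_all n (x y : nat) : 0 < x -> x < n.+1 -> y < n.+1 -> coprime x y ->
  <<[set (inZp x : 'I_n.+1); inZp y]>> = setT.
Proof.
move=> x0 xn yn cxy.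
set H := <<_>>.
have XH : (inZp x : 'I_n.+1) \in H by apply: mem_gen; rewrite !inE eqxx.
have YH : (inZp y : 'I_n.+1) \in H by apply: mem_gen; rewrite !inE eqxx orbT.
case: (egcdnP y x0) => km kn Heq _.
move: cxy; rewrite /coprime => /eqP g1; rewrite g1 in Heq.
have E : (inZp x : 'I_n.+1) ^+ km = (inZp y : 'I_n.+1) ^+ kn * Zp1.
  apply: val_inj; rewrite !Zp_expg /= (modn_small xn) (modn_small yn) modnDm.
  by rewrite mulnC Heq mulnC.
have H1 : (Zp1 : 'I_n.+1) \in H.
  by have := groupX km XH; rewrite E groupMl // groupX.
apply/eqP; rewrite eqEsubset subsetT /= Zp_cycle cycle_subG //.
Qed.

Lemma gen_not n (x y q : nat) : prime q -> q %| n.+1 -> q %| x -> q %| y ->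
  <<[set (inZp x : 'I_n.+1); inZp y]>> != setT.
Proof.
move=> qP qn qx qy.
have dm m : (q %| m %% n.+1) = (q %| m).
  by rewrite {2}(divn_eq m n.+1) dvdn_addr // dvdn_mull.
have gK : group_set [set z : 'I_n.+1 | q %| z].
  apply/group_setP; split; first by rewrite inE /= dvdn0.
  by move=> a b; rewrite !inE /= dm; apply: dvdn_add.
have sub : <<[set (inZp x : 'I_n.+1); inZp y]>> \subset Group gK.
  by rewrite gen_subG; apply/subsetP => z; rewrite !inE /= => /orP[]/eqP-> /=; rewrite dm.
apply/negP => /eqP HT; rewrite HT in sub.
have := subsetP sub (Zp1 : 'I_n.+1) (in_setT _).
rewrite inE /= dm Euclid_dvd1 //.
Qed.

Fixpoint pp k := if k is k'.+1 then s2val (prime_above (pp k')) else s2val (prime_above 1).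
Lemma pp_prime k : prime (pp k).
Proof. by case: k => [|k] /=; case: prime_above. Qed.
Lemma pp_inj : injective pp.
Proof.
have st i : pp i < pp i.+1 by rewrite /=; case: prime_above.
have h i d : pp i < pp (i + d).+1.
  elim: d => [|d IH]; first by rewrite addn0.
  by apply: ltn_trans IH _; rewrite addnS.
have {}h i j : i < j -> pp i < pp j.
  by move=> lij; rewrite -(subnKC lij) addSn; apply: h.
move=> i j E; case: (ltngtP i j) => // /h; by rewrite E ltnn.
Qed.

Local Close Scope group_scope.

Theorem theorem5p2 (V : finType) (e : rel V) :
  simple_graph e ->
  exists (gT : finGroupType) (G : {group gT}) (f : V -> gT),
    induced_embedding e G f.
Proof.
case=> esy eirr.
pose I := (V * V)%type.
pose pr (i : I) := pp (enum_rank i).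
have prP i : prime (pr i) by exact: pp_prime.
have prI : injective pr by move=> i j /pp_inj/val_inj; exact: enum_rank_inj.
pose S (v : V) := [pred i : I | ((i.1 == v) || (i.2 == v)) && ~~ e i.1 i.2].
pose a v := (\prod_(i | S v i) pr i)%N.
pose P := (\prod_(i : I) pr i)%N.
have pos i : 0 < pr i by apply: prime_gt0.
have a0 v : 0 < a v by apply: prodn_gt0.
have P0 : 0 < P by apply: prodn_gt0.
have aP v : a v %| P by rewrite /P (bigID (S v)) /= dvdn_mulr.
have dva v i : S v i -> pr i %| a v by move=> Si; rewrite /a (bigD1 i) //= dvdn_mulr.
have prdv v i : S v i -> pr i %| P by move=> Si; apply: dvdn_trans (dva _ _ Si) (aP v).
pose n := (2 * P).-1.
have hn : n.+1 = 2 * P by rewrite /n prednK // muln_gt0.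
have an v : a v < n.+1.
  rewrite hn; apply: (leq_ltn_trans (dvdn_leq P0 (aP v))).
  by rewrite mul2n -addnn -[X in X < _]addn0 ltn_add2l.
pose f v : 'I_n.+1 := inZp (a v).
have fv v : val (f v) = a v by rewrite /= modn_small.
have Svv v : S v (v, v) by rewrite /= eqxx eirr.
have finj : injective f.
  move=> u v E.
  have : pr (v, v) %| a u by rewrite -fv E fv; apply: dva.
  case/dvd_prod_ex => // i Sui; rewrite dvdn_prime2 // => /eqP/prI ivv.
  by move: Sui; rewrite -ivv /= orbb andbC eirr /= => /eqP.
exists _, [set: 'I_n.+1]%G, f.
split=> //; split=> [v|u v]; first exact: in_setT.
rewrite /gen_adj !in_setT /=.
have [->|uv] := eqVneq u v; first by rewrite eirr eqxx.
have -> : (f u != f v) by apply: contra_neq uv => /finj.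
rewrite /=.
case euv: (e u v).
  apply/esym/eqP; apply: gen_all; rewrite ?an //.
  rewrite /a; apply: (big_ind (fun x => coprime x (a v))) => [|x y|i Sui].
  - exact: coprime1n.
  - by rewrite coprimeMl => -> ->.
  rewrite prime_coprime //; apply/negP => /dvd_prod_ex [] // j Svj.
  rewrite dvdn_prime2 // => /eqP /prI ij; subst j.
  move: Sui Svj; case: i => x y /=; case/andP => hu nxy; case/andP => hv _.
  case/orP: hu => /eqP hu; case/orP: hv => /eqP hv; subst;
    idtac. all: try by rewrite eqxx in uv.
  - by rewrite euv in nxy.
  - by rewrite esy euv in nxy.
apply/esym/negbTE.
have Suv : S u (u, v) by rewrite /= eqxx euv.
have Svv' : S v (u, v) by rewrite /= eqxx orbT euv.
apply: (@gen_not n _ _ (pr (u, v))) => //; last by apply: dva.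
  by rewrite hn dvdn_mull // (prdv u).
by apply: dva.
Qed.
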